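(* Let $H \subset L$ be a commutative field extension, let $\alpha \in L$ and set $M = H(\alpha)$. Then, for all positive integers $r,s \le \dim_H M$, we have $\mu_{H,M}(r,s) \le r+s-1$.
   Context: For $H$-subspaces $A,B$ of $M$, $\langle AB\rangle$ denotes the $H$-subspace of $M$ spanned by the product set $AB=\{ab \mid a\in A, b\in B\}$. For positive integers $r,s \le \dim_H M$, $\mu_{H,M}(r,s)$ is the minimum of $\dim_H \langle AB\rangle$ over all $H$-subspaces $A,B$ of $M$ with $\dim_H A = r$ and $\dim_H B = s$. *)

(* Defs.v *)
From mathcomp Require Import all_boot all_order all_algebra.
Set Implicit Arguments. Unset Strict Implicit. Unset Printing Implicit Defensive.
Import GRing.Theory.
Local Open Scope ring_scope.

Definition is_subfield (L : fieldType) (H : L -> Prop) : Prop :=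
  H 1 /\ (forall x y, H x -> H y -> H (x - y)) /\
  (forall x y, H x -> H y -> H (x * y)) /\ (forall x, H x -> H x^-1).

Definition genfield (L : fieldType) (H : L -> Prop) (alpha : L) : L -> Prop :=
  fun x => forall K : L -> Prop, is_subfield K ->
    (forall y, H y -> K y) -> K alpha -> K x.

Definition Hfree (L : fieldType) (H : L -> Prop) (n : nat) (v : 'I_n -> L) : Prop :=
  forall c : 'I_n -> L, (forall i, H (c i)) ->
    \sum_(i < n) c i * v i = 0 -> forall i, c i = 0.

Definition Hspan (L : fieldType) (H : L -> Prop) (S : L -> Prop) : L -> Prop :=
  fun x => exists n (c u : 'I_n -> L),
    (forall i, H (c i) /\ S (u i)) /\ x = \sum_(i < n) c i * u i.

Definition Hsubspace (L : fieldType) (H : L -> Prop) (A : L -> Prop) : Prop :=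
  A 0 /\ (forall x y, A x -> A y -> A (x + y)) /\
  (forall c x, H c -> A x -> A (c * x)).

Definition Hdim_eq (L : fieldType) (H : L -> Prop) (A : L -> Prop) (n : nat) : Prop :=
  exists v : 'I_n -> L, Hfree H v /\
    forall x, A x <-> Hspan H (fun y => exists i, y = v i) x.

(* r <= dim_H M (dim_H M possibly infinite): M contains r H-independent elements. *)
Definition Hdim_ge (L : fieldType) (H : L -> Prop) (M : L -> Prop) (r : nat) : Prop :=
  exists v : 'I_r -> L, (forall i, M (v i)) /\ Hfree H v.

Definition prodset (L : fieldType) (A B : L -> Prop) : L -> Prop :=
  fun x => exists a b, A a /\ B b /\ x = a * b.

(* n is one of the values dim_H <AB> over all H-subspaces A, B of M with
   dim_H A = r, dim_H B = s; mu_{H,M}(r,s) is the minimum of these values. *)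
Definition mu_value (L : fieldType) (H M : L -> Prop) (r s n : nat) : Prop :=
  exists A B : L -> Prop,
    Hsubspace H A /\ (forall x, A x -> M x) /\ Hdim_eq H A r /\
    Hsubspace H B /\ (forall x, B x -> M x) /\ Hdim_eq H B s /\
    Hdim_eq H (Hspan H (prodset A B)) n.

(* Main.v *)
Require Import Defs.
From mathcomp Require Import all_boot all_order all_algebra.
From Stdlib Require Import Classical.
Set Implicit Arguments. Unset Strict Implicit. Unset Printing Implicit Defensive.
Import GRing.Theory.
Local Open Scope ring_scope.

Lemma sf0 (L : fieldType) (H : L -> Prop) : is_subfield H -> H 0.
Proof. move=> [H1 [HB _]]; have := HB 1 1 H1 H1; by rewrite subrr. Qed.
Lemma sfN (L : fieldType) (H : L -> Prop) x : is_subfield H -> H x -> H (- x).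
Proof. move=> hs hx; rewrite -sub0r; case: (hs) => [_ [HB _]]; apply: HB => //; exact: sf0. Qed.
Lemma sfD (L : fieldType) (H : L -> Prop) x y : is_subfield H -> H x -> H y -> H (x + y).
Proof. move=> hs hx hy; rewrite -(opprK y); case: (hs) => [_ [HB _]]; apply: HB => //; exact: sfN. Qed.
Lemma sfB (L : fieldType) (H : L -> Prop) x y : is_subfield H -> H x -> H y -> H (x - y).
Proof. by move=> [_ [HB _]]; apply: HB. Qed.
Lemma sfM (L : fieldType) (H : L -> Prop) x y : is_subfield H -> H x -> H y -> H (x * y).
Proof. by move=> [_ [_ [HM _]]]; apply: HM. Qed.
Lemma sfV (L : fieldType) (H : L -> Prop) x : is_subfield H -> H x -> H (x^-1).
Proof. by move=> [_ [_ [_ HV]]]; apply: HV. Qed.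
Lemma sfsum (L : fieldType) (H : L -> Prop) n (F : 'I_n -> L) : is_subfield H ->
  (forall i, H (F i)) -> H (\sum_(i < n) F i).
Proof. move=> hs hF; apply: (big_ind H) => //; [exact: sf0| move=> ????; exact: sfD]. Qed.

Lemma sys (L : fieldType) (H : L -> Prop) : is_subfield H -> forall d m
  (C : 'I_m -> 'I_d -> L), (forall i j, H (C i j)) -> (d < m)%N ->
  exists x : 'I_m -> L, (forall i, H (x i)) /\ (exists i, x i != 0) /\
    forall j, \sum_(i < m) x i * C i j = 0.
Proof.
move=> hs; elim=> [|d IH] m C hC hdm.
  exists (fun _ => 1); split; first by case: hs.
  split; last by case.
  by exists (Ordinal hdm); rewrite oner_eq0.
have [allz|] := classic (forall i, C i ord_max = 0).
  have [x [hx [nz hs0]]] := IH m (fun i j => C i (lift ord_max j)) (fun i j => hC _ _) (ltnW hdm).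
  exists x; split=> //; split=> // j.
  case: (unliftP ord_max j) => [j' ->|->]; first exact: hs0.
  by rewrite big1 // => i _; rewrite allz mulr0.
move=> /not_all_ex_not [i0 hi0].
case: m C hC hdm i0 hi0 => [|m] C hC hdm i0 hi0; first by case: i0 hi0.
set a := C i0 ord_max.
pose C' := fun k j => C (lift i0 k) (lift ord_max j) - C (lift i0 k) ord_max / a * C i0 (lift ord_max j).
have hC' : forall k j, H (C' k j).
  move=> k j; apply: (sfB hs (hC _ _)); apply: (sfM hs); last exact: hC.
  apply: (sfM hs (hC _ _)); exact: (sfV hs (hC _ _)).
have [y [hy [[k0 nz] hsy]]] := IH m C' hC' hdm.
pose S := \sum_(k < m) y k * C (lift i0 k) ord_max.
pose x := fun i => if unlift i0 i is Some k then y k else - (S / a).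
have xl : forall k, x (lift i0 k) = y k by move=> k; rewrite /x liftK.
have x0 : x i0 = - (S / a) by rewrite /x unlift_none.
exists x; split.
  move=> i; rewrite /x; case: unlift => [k|] //; apply: (sfN hs); apply: (sfM hs).
    apply: (sfsum hs) => k; exact: (sfM hs (hy _) (hC _ _)).
  exact: (sfV hs (hC _ _)).
split; first by exists (lift i0 k0); rewrite xl.
have ha : a != 0 by apply/eqP.
move=> j; rewrite (bigD1_ord i0) //= x0.
under eq_bigr => k _ do rewrite xl.
case: (unliftP ord_max j) => [j' ->|->].
  have := hsy j'; rewrite /C' /=.
  under eq_bigr => k _ do rewrite mulrBr mulrA.
  rewrite sumrB -mulr_suml.
  have E : \sum_(i<m) y i * (C (lift i0 i) ord_max / a) = S / a.
    by rewrite /S mulr_suml; apply: eq_bigr => i _; rewrite mulrA.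
  by rewrite E => /eqP; rewrite subr_eq0 => /eqP ->; rewrite mulNr addNr.
by rewrite -/S -/a mulNr divfK // addNr.
Qed.

Definition Comb (L : fieldType) (H : L -> Prop) n (u : 'I_n -> L) (x : L) :=
  exists c : 'I_n -> L, (forall i, H (c i)) /\ x = \sum_(i < n) c i * u i.

Lemma comb_sub (L : fieldType) (H : L -> Prop) n (u : 'I_n -> L) :
  is_subfield H -> Hsubspace H (Comb H u).
Proof.
move=> hs; split; last split.
- exists (fun _ => 0); split; first by move=> _; exact: sf0.
  by rewrite big1 // => i _; rewrite mul0r.
- move=> x y [c [hc ->]] [c' [hc' ->]]; exists (fun i => c i + c' i); split.
    by move=> i; apply: sfD.
  by rewrite -big_split; apply: eq_bigr => i _; rewrite mulrDl.
- move=> k x hk [c [hc ->]]; exists (fun i => k * c i); split.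
    by move=> i; apply: sfM.
  by rewrite mulr_sumr; apply: eq_bigr => i _; rewrite mulrA.
Qed.

Lemma sub_sum (L : fieldType) (H : L -> Prop) (T : L -> Prop) n (F : 'I_n -> L) :
  Hsubspace H T -> (forall i, T (F i)) -> T (\sum_(i < n) F i).
Proof. move=> [T0 [TD _]] hF; by apply: (big_ind T). Qed.

Lemma hspan_sub (L : fieldType) (H : L -> Prop) (S T : L -> Prop) x :
  Hsubspace H T -> (forall y, S y -> T y) -> Hspan H S x -> T x.
Proof.
move=> hT hST [n [c [u [hcu ->]]]]; apply: (sub_sum hT) => i.
case: (hcu i) => hc hu; case: hT => [_ [_ TM]]; apply: TM => //; exact: hST.
Qed.

Lemma comb_elt (L : fieldType) (H : L -> Prop) n (u : 'I_n -> L) i :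
  is_subfield H -> Comb H u (u i).
Proof.
move=> hs; exists (fun j => (j == i)%:R); split.
  by move=> j; case: (j == i); [case: hs | exact: sf0].
rewrite (bigD1 i) //= eqxx mul1r big1 ?addr0 // => j /negbTE ->; by rewrite mul0r.
Qed.

Lemma span_comb (L : fieldType) (H : L -> Prop) n (u : 'I_n -> L) x :
  is_subfield H -> (Hspan H (fun y => exists i, y = u i) x <-> Comb H u x).
Proof.
move=> hs; split.
  apply: hspan_sub; first exact: comb_sub.
  by move=> y [i ->]; exact: comb_elt.
move=> [c [hc ->]]; exists n, c, u; split=> // i; split=> //; by exists i.
Qed.

Lemma notfree (L : fieldType) (H : L -> Prop) d k (u : 'I_d -> L) (v : 'I_k -> L) :
  is_subfield H -> (forall i, Comb H u (v i)) -> (d < k)%N -> ~ Hfree H v.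
Proof.
move=> hs hv hdk hfree.
have [C hC] := fin_all_exists hv.
have [x [hx [[i0 nz] hsx]]] := sys hs (fun i j => (proj1 (hC i)) j) hdk.
suff S0 : \sum_(i < k) x i * v i = 0 by move: nz; rewrite (hfree x hx S0 i0) eqxx.
under eq_bigr => i _ do rewrite (proj2 (hC i)) mulr_sumr.
rewrite exchange_big big1 // => j _.
rewrite (_ : \sum_(i < k) _ = (\sum_(i < k) x i * C i j) * u j).
  by have := hsx j => /= ->; rewrite mul0r.
by rewrite mulr_suml; apply: eq_bigr => i _; rewrite mulrA.
Qed.

Definition ext (L : fieldType) n (v : 'I_n -> L) (y : L) : 'I_n.+1 -> L :=
  fun i => if unlift ord_max i is Some j then v j else y.

Lemma ext_w (L : fieldType) n (v : 'I_n -> L) y j : ext v y (widen_ord (leqnSn n) j) = v j.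
Proof.
have -> : widen_ord (leqnSn n) j = lift ord_max j by apply: val_inj; rewrite /= /bump leqNgt ltn_ord.
by rewrite /ext liftK.
Qed.

Lemma ext_m (L : fieldType) n (v : 'I_n -> L) y : ext v y ord_max = y.
Proof. by rewrite /ext unlift_none. Qed.

Lemma ldep (L : fieldType) (H : L -> Prop) n (v : 'I_n -> L) y :
  is_subfield H -> Hfree H v -> ~ Hfree H (ext v y) -> Comb H v y.
Proof.
move=> hs hv hn.
have [c [hc [hsum [i0 nz]]]] : exists c : 'I_n.+1 -> L, (forall i, H (c i)) /\
   \sum_(i < n.+1) c i * ext v y i = 0 /\ exists i, c i <> 0.
  apply: NNPP => hneg; apply: hn => c hc hs0 i; apply: NNPP => hci; apply: hneg.
  by exists c; split=> //; split=> //; exists i.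
move: hsum; rewrite big_ord_recr /= ext_m.
under eq_bigr => j _ do rewrite ext_w.
set a := c ord_max => hsum.
have ha : a != 0.
  apply/eqP => a0; move: hsum; rewrite a0 mul0r addr0 => hsum.
  have := hv _ (fun j => hc _) hsum => hz; apply: nz.
  case: (unliftP ord_max i0) => [j ->|->] //.
  by rewrite -(hz j); congr c; apply: val_inj; rewrite /= /bump leqNgt ltn_ord.
exists (fun j => - (c (widen_ord (leqnSn n) j) / a)); split.
  move=> j; apply: (sfN hs); apply: (sfM hs (hc _)); exact: (sfV hs (hc _)).
apply: (mulfI ha); rewrite mulr_sumr.
move/eqP: hsum; rewrite addrC addr_eq0 => /eqP ->.
rewrite -sumrN; apply: eq_bigr => j _.
by rewrite mulNr mulrN mulrA (mulrC a) divfK.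
Qed.

From Stdlib Require Import FunctionalExtensionality.

Lemma gen_sf (L : fieldType) (H : L -> Prop) a : is_subfield (genfield H a).
Proof.
split; [|split; [|split]].
- by move=> K [] .
- by move=> x y hx hy K hK hH ha; case: (hK) => [_ [hB _]]; apply: hB; [apply: hx|apply: hy].
- by move=> x y hx hy K hK hH ha; apply: (sfM hK); [apply: hx|apply: hy].
- by move=> x hx K hK hH ha; apply: (sfV hK); apply: hx.
Qed.

Lemma gen_H (L : fieldType) (H : L -> Prop) a y : H y -> genfield H a y.
Proof. by move=> hy K _ hH _; apply: hH. Qed.

Lemma gen_a (L : fieldType) (H : L -> Prop) a : genfield H a a.
Proof. by move=> K _ _ ha. Qed.

Lemma sf_subspace (L : fieldType) (H K : L -> Prop) :
  is_subfield K -> (forall y, H y -> K y) -> Hsubspace H K.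
Proof.
move=> hK hHK; split; first exact: sf0.
split; first by move=> x y; apply: sfD.
by move=> c x hc hx; apply: (sfM hK) => //; apply: hHK.
Qed.

Lemma sf_pow (L : fieldType) (K : L -> Prop) a k : is_subfield K -> K a -> K (a ^+ k).
Proof.
move=> hK ha; elim: k => [|k IH]; first by rewrite expr0; case: hK.
by rewrite exprS; apply: sfM.
Qed.

Definition pw (L : fieldType) (a : L) n : 'I_n -> L := fun i => a ^+ i.
Arguments pw {L} a n.

Lemma pwS (L : fieldType) (a : L) m : pw a m.+1 = ext (pw a m) (a ^+ m).
Proof.
apply: functional_extensionality => i; rewrite /ext.
case: (unliftP ord_max i) => [j ->|->] //.
by rewrite /pw /= /bump leqNgt ltn_ord.
Qed.

Lemma step (L : fieldType) (H : L -> Prop) a m r : is_subfield H ->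
  Hfree H (pw a m) -> ~ Hfree H (pw a m.+1) -> Hdim_ge H (genfield H a) r -> (r <= m)%N.
Proof.
move=> hs hf hnf [v [hvM hvf]].
rewrite pwS in hnf.
have hP := comb_sub (pw a m) hs.
set P := Comb H (pw a m) in hP.
have ham : P (a ^+ m) by apply: ldep.
have m0 : (0 < m)%N.
  case: m hf hnf {hP ham} P => // _ hnf; exfalso; apply: hnf; rewrite -pwS.
  move=> c hc; rewrite big_ord1 /pw expr0 mulr1 => h0 i; by rewrite ord1.
have hscal : forall c x, H c -> P x -> P (c * x) by case: hP => [_ [_ ?]].
have halpha : forall x, P x -> P (a * x).
  move=> x [c [hc ->]]; rewrite mulr_sumr; apply: (sub_sum hP) => i.
  rewrite mulrCA; apply: hscal => //; rewrite /pw -exprS.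
  case: (ltnP i.+1 m) => hi; first exact: (comb_elt (pw a m) (Ordinal hi) hs).
  by have -> : i.+1 = m by apply/eqP; rewrite eqn_leq hi ltn_ord.
have hpow : forall k, P (a ^+ k).
  elim=> [|k IH]; first exact: (comb_elt (pw a m) (Ordinal m0) hs).
  by rewrite exprS; apply: halpha.
have hmul : forall x y, P x -> P y -> P (x * y).
  move=> x y hx [d [hd ->]]; rewrite mulr_sumr; apply: (sub_sum hP) => j.
  rewrite mulrCA; apply: hscal => //; rewrite /pw.
  elim: (nat_of_ord j) => [|k IH]; first by rewrite expr0 mulr1.
  by rewrite exprS mulrCA; apply: halpha.
have hone : P 1 by rewrite -(expr0 a).
have hinv : forall x, P x -> P x^-1.
  move=> x hx; have [->|nz] := eqVneq x 0; first by rewrite invr0; case: hP.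
  pose w := fun i : 'I_m => x * a ^+ i.
  have hw : Hfree H w.
    move=> c hc; rewrite /w.
    under eq_bigr => i _ do rewrite mulrCA.
    rewrite -mulr_sumr => /eqP; rewrite mulf_eq0 (negbTE nz) /= => /eqP; exact: hf.
  have hext : ~ Hfree H (ext w 1).
    apply: (notfree (u := pw a m) hs) => // i.
    rewrite /ext; case: unlift => [j|] //; rewrite /w; apply: hmul => //.
  have [c [hc e1]] := ldep hs hw hext.
  have -> : x^-1 = \sum_(i < m) c i * a ^+ i.
    rewrite -[LHS]mulr1 e1 /w.
    under eq_bigr => i _ do rewrite mulrCA.
    by rewrite -mulr_sumr mulKf.
  by exists c.
have hPsf : is_subfield P.
  split=> //; split; last split=> //.
  move=> x y hx hy; case: hP => [_ [hD _]]; apply: hD => //.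
  rewrite -mulN1r; apply: hscal => //; apply: sfN => //; by case: hs.
have hMP : forall x, genfield H a x -> P x.
  move=> x hx; apply: hx => //.
    by move=> y hy; rewrite -[y]mulr1; apply: hscal.
  by rewrite -[a]expr1.
rewrite leqNgt; apply/negP => hmr.
by apply: (notfree (u := pw a m) hs _ hmr hvf) => i; apply: hMP.
Qed.

Lemma powfree (L : fieldType) (H : L -> Prop) a r : is_subfield H ->
  Hdim_ge H (genfield H a) r -> Hfree H (pw a r).
Proof.
move=> hs hr.
suff : forall k, (k <= r)%N -> Hfree H (pw a k) by apply.
elim=> [|k IH] hk; first by move=> c _ _; case.
have hf := IH (ltnW hk).
apply: NNPP => hn; have := step hs hf hn hr; by rewrite leqNgt hk.
Qed.

From mathcomp Require Import zify.

Lemma maxbasis (L : fieldType) (H : L -> Prop) N (u : 'I_N -> L) :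
  is_subfield H -> exists n, (n <= N)%N /\ Hdim_eq H (Comb H u) n.
Proof.
move=> hs.
pose Q n := exists v : 'I_n -> L, (forall i, Comb H u (v i)) /\ Hfree H v.
have Qb : forall n, Q n -> (n <= N)%N.
  move=> n [v [hv hf]]; rewrite leqNgt; apply/negP => hn.
  exact: (notfree hs hv hn).
have [n [hQ hnQ]] : exists n, Q n /\ ~ Q n.+1.
  apply: NNPP => hneg.
  have : forall n, Q n.
    elim=> [|n IH].
      by exists (fun _ => 0); split; [case| move=> c _ _; case].
    apply: NNPP => hn; apply: hneg; by exists n.
  by move/(_ N.+1)/Qb; rewrite ltnn.
exists n; split; first exact: Qb.
case: hQ => v [hv hf]; exists v; split=> // x; split.
  move=> hx; apply/(span_comb _ _ hs); apply: ldep => // hfe; apply: hnQ.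
  exists (ext v x); split=> // i; rewrite /ext; case: unlift => [j|] //.
apply: hspan_sub; first exact: comb_sub.
by move=> y [i ->].
Qed.

Theorem lemma4p1 (L : fieldType) (H : L -> Prop) (alpha : L) (r s : nat) :
  is_subfield H ->
  (0 < r)%N -> (0 < s)%N ->
  Hdim_ge H (genfield H alpha) r -> Hdim_ge H (genfield H alpha) s ->
  exists n, mu_value H (genfield H alpha) r s n /\ (n <= r + s - 1)%N.
Proof.
move=> hs r0 s0 hr hsd.
set M := genfield H alpha.
have hMs : Hsubspace H M by apply: sf_subspace; [exact: gen_sf | exact: gen_H].
have combM : forall k x, Comb H (pw alpha k) x -> M x.
  move=> k x [c [hc ->]]; apply: (sub_sum hMs) => i; case: hMs => [_ [_ hZ]].
  apply: (hZ (c i) (pw alpha k i)) => //.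
  exact: (@sf_pow L M alpha i (@gen_sf L H alpha) (@gen_a L H alpha)).
have dimpw : forall k, Hdim_ge H M k -> Hdim_eq H (Comb H (pw alpha k)) k.
  move=> k hk; exists (pw alpha k); split; first exact: powfree.
  by move=> x; rewrite span_comb.
set N := (r + s - 1)%N.
have [n [hnN hdn]] := maxbasis (pw alpha N) hs.
exists n; split=> //.
set A := Comb H (pw alpha r); set B := Comb H (pw alpha s).
exists A, B; split; first exact: comb_sub.
split; first exact: combM.
split; first exact: dimpw.
split; first exact: comb_sub.
split; first exact: combM.
split; first exact: dimpw.
have hP := comb_sub (pw alpha N) hs.
have hscal : forall c x, H c -> Comb H (pw alpha N) x -> Comb H (pw alpha N) (c * x).
  by case: hP => [_ [_ ?]].
have equiv : forall x, Hspan H (prodset A B) x <-> Comb H (pw alpha N) x.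
  move=> x; split.
    apply: hspan_sub => // y [a [b [[c [hc ->]] [[d [hd ->]] ->]]]].
    rewrite mulr_suml; apply: (sub_sum hP) => i; rewrite mulr_sumr; apply: (sub_sum hP) => j.
    rewrite /pw mulrACA -exprD; apply: hscal; first exact: sfM.
    have hij : (i + j < N)%N by have := ltn_ord i; have := ltn_ord j; rewrite /N; lia.
    exact: (comb_elt (pw alpha N) (Ordinal hij) hs).
  move=> [c [hc ->]].
  exists N, c, (fun k : 'I_N => alpha ^+ (minn k (r - 1)) * alpha ^+ (k - minn k (r - 1))).
  split.
    move=> k; split=> //.
    have hi : (minn k (r - 1) < r)%N by lia.
    have hj : (k - minn k (r - 1) < s)%N by have := ltn_ord k; rewrite /N; lia.
    exists (alpha ^+ (minn k (r - 1))), (alpha ^+ (k - minn k (r - 1))); split.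
      exact: (comb_elt (pw alpha r) (Ordinal hi) hs).
    by split=> //; exact: (comb_elt (pw alpha s) (Ordinal hj) hs).
  apply: eq_bigr => k _; rewrite -exprD subnKC //; exact: geq_minl.
case: hdn => v [hvf hv]; exists v; split=> // x.
by rewrite equiv.
Qed.
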